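(* Let $\mathcal X,\mathcal Y$ be complex Hilbert spaces and $A:\mathcal X\supset\operatorname{dom}A\to\mathcal Y$ a closed, densely defined linear operator with $\|Ax\|_{\mathcal Y}\ge c\|x\|_{\mathcal X}$ for some $c>0$ and all $x\in\operatorname{dom}A$. Let $\mathcal X_h$ be $\operatorname{dom}A$ with inner product $\langle Ax,Ay\rangle_{\mathcal Y}$, $\mathcal Y_1=\operatorname{ran}A$ with the inner product of $\mathcal Y$ (so $A:\mathcal X_h\to\mathcal Y_1$ is an isometric isomorphism), and $\mathcal Z_h=\mathcal X_h\times\mathcal X$. Let $B:\mathcal Y\supset\operatorname{dom}B\to\mathcal X$ be closed, densely defined with $A^*\subset-B$, and $B_{\mathcal Y_1}$ the restriction of $B$ to $\operatorname{dom}B\cap\mathcal Y_1$ viewed as an operator $\mathcal Y_1\to\mathcal X$. Let $\mathcal A$ on $\mathcal Z_h$ be given by $\operatorname{dom}\mathcal A=\{(z_1,z_2)\in\mathcal X_h\times\mathcal X_h: Az_1\in\operatorname{dom}B\}$, $\mathcal A(z_1,z_2)=(z_2,BAz_1)$, and define $\mathcal B_1$ on $\mathcal Y_1\times\mathcal X$ (product inner product) by $\operatorname{dom}\mathcal B_1=\operatorname{dom}B_{\mathcal Y_1}\times\mathcal X_h$, $\mathcal B_1(v,w)=(Aw,\ Bv)$; equivalently $\mathcal B_1=\operatorname{diag}(A,I)\,\mathcal A\,\operatorname{diag}(A^{-1},I)$. Let $\mathcal G_1,\mathcal G_2$ be Hilbert spaces and $\Lambda=(\Lambda_1,\Lambda_2):\operatorname{dom}A\to\mathcal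 G_1\times\mathcal G_2^*$, $\Pi=(\Pi_1,\Pi_2):\operatorname{dom}B\to\mathcal G_1^*\times\mathcal G_2$ surjective linear maps with $-\langle By,x\rangle_{\mathcal X}-\langle y,Ax\rangle_{\mathcal Y}=\langle\Pi_1y,\Lambda_1x\rangle_{\mathcal G_1^*,\mathcal G_1}-\langle\Pi_2y,\Lambda_2x\rangle_{\mathcal G_2,\mathcal G_2^*}$ for all $y\in\operatorname{dom}B$, $x\in\operatorname{dom}A$. Let $\mathcal G=\mathcal G_1\times\mathcal G_2$, $\mathcal G^*=\mathcal G_1^*\times\mathcal G_2^*$, and on $\operatorname{dom}\mathcal A$ let $\Gamma_0(z_1,z_2)=(\Lambda_1z_2,\Pi_2Az_1)$, $\Gamma_1(z_1,z_2)=(-\Pi_1Az_1,\Lambda_2z_2)$. Define on $\operatorname{dom}\mathcal B_1$ $\Xi_0(v,w)=(\Lambda_1w,\ \Pi_2v)\in\mathcal G$, $\Xi_1(v,w)=(-\Pi_1v,\ \Lambda_2w)\in\mathcal G^*$. Then $(\mathcal G,\Xi_0,\Xi_1)$ is a boundary triplet for $\mathcal B_1$, i.e. $(\Xi_0,\Xi_1):\operatorname{dom}\mathcal B_1\to\mathcal G\times\mathcal G^*$ is surjective and $\langle\mathcal B_1f,g\rangle_{\mathcal Y_1\times\mathcal X}+\langle f,\mathcal B_1g\rangle_{\mathcal Y_1\times\mathcal X}=\langle\Xi_1f,\Xi_0g\rangle_{\mathcal G^*,\mathcal G}+\langle\Xi_0f,\Xi_1g\rangle_{\mathcal G,\mathcal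 G^*}$ for all $f,g\in\operatorname{dom}\mathcal B_1$. In particular $\Xi_i=\Gamma_i\operatorname{diag}(A^{-1},I)$ for $i=0,1$.
   Context: All Hilbert spaces are complex; $\mathcal H^*$ denotes the anti-dual of a Hilbert space $\mathcal H$, $\langle\cdot,\cdot\rangle_{\mathcal H^*,\mathcal H}$ the duality pairing and $\langle h,\phi\rangle_{\mathcal H,\mathcal H^*}:=\overline{\langle\phi,h\rangle_{\mathcal H^*,\mathcal H}}$. *)

(* Defs.v *)
From HB Require Import structures.
From mathcomp Require Import all_boot all_order all_algebra.
From mathcomp Require Import complex.
From mathcomp Require Import reals.
Set Implicit Arguments. Unset Strict Implicit. Unset Printing Implicit Defensive.
Import Order.TTheory GRing.Theory Num.Theory.
Local Open Scope ring_scope.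

Section Defs.
Variable R : realType.
Local Notation C := (R[i]).

Definition inner_product (V : lmodType C) (ip : V -> V -> C) : Prop :=
  [/\ forall (a : C) (x y z : V), ip (a *: x + y) z = a * ip x z + ip y z,
      forall x y : V, ip y x = (ip x y)^*,
      forall x : V, 0 <= ip x x
    & forall x : V, ip x x = 0 -> x = 0].

Definition hnorm (V : lmodType C) (ip : V -> V -> C) (x : V) : C := sqrtC (ip x x).

Definition cvg_seq (V : lmodType C) (ip : V -> V -> C) (u : nat -> V) (x : V) :=
  forall eps : C, 0 < eps -> exists N : nat, forall n, (N <= n)%N ->
    hnorm ip (u n - x) < eps.

Definition cauchy_seq (V : lmodType C) (ip : V -> V -> C) (u : nat -> V) :=
  forall eps : C, 0 < eps -> exists N : nat, forall m n, (N <= m)%N -> (N <= n)%N ->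
    hnorm ip (u m - u n) < eps.

Definition hilbert (V : lmodType C) (ip : V -> V -> C) : Prop :=
  inner_product ip /\
  forall u : nat -> V, cauchy_seq ip u -> exists x, cvg_seq ip u x.

Definition subspace (V : lmodType C) (D : V -> Prop) : Prop :=
  D 0 /\ forall (a : C) (x y : V), D x -> D y -> D (a *: x + y).

Definition linear_on (V W : lmodType C) (D : V -> Prop) (T : V -> W) : Prop :=
  subspace D /\
  forall (a : C) (x y : V), D x -> D y -> T (a *: x + y) = a *: T x + T y.

Definition linear_on_fun (V W : lmodType C) (D : V -> Prop) (T : V -> W -> C) :=
  subspace D /\
  forall (a : C) (x y : V), D x -> D y ->
    T (a *: x + y) = (fun g => a * T x g + T y g).

Definition closed_op (V W : lmodType C) (ipV : V -> V -> C) (ipW : W -> W -> C)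
    (D : V -> Prop) (T : V -> W) : Prop :=
  forall (u : nat -> V) (x : V) (y : W), (forall n, D (u n)) ->
    cvg_seq ipV u x -> cvg_seq ipW (fun n => T (u n)) y -> D x /\ T x = y.

Definition dense_in (V : lmodType C) (ipV : V -> V -> C) (D : V -> Prop) : Prop :=
  forall x : V, exists u : nat -> V, (forall n, D (u n)) /\ cvg_seq ipV u x.

Definition adjoint_graph (V W : lmodType C) (ipV : V -> V -> C) (ipW : W -> W -> C)
    (D : V -> Prop) (T : V -> W) (y : W) (z : V) : Prop :=
  forall x, D x -> ipW (T x) y = ipV x z.

Definition adjoint_sub_neg (V W : lmodType C) (ipV : V -> V -> C) (ipW : W -> W -> C)
    (D : V -> Prop) (T : V -> W) (DS : W -> Prop) (S : W -> V) : Prop :=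
  forall y z, adjoint_graph ipV ipW D T y z -> DS y /\ S y = - z.

(* the anti-dual G^*: bounded antilinear functionals G -> C;
   the duality pairing <phi, g>_{G^*,G} is phi g *)
Definition antidual (G : lmodType C) (ipG : G -> G -> C) (phi : G -> C) : Prop :=
  (forall (a : C) (x y : G), phi (a *: x + y) = a^* * phi x + phi y) /\
  exists M : C, forall x, `|phi x| <= M * hnorm ipG x.

End Defs.

(* The operators of the lemma (on Y x X, with Y_1 = ran A as a domain condition) *)
Section Ops.
Variables (R : realType) (X Y G1 G2 : lmodType R[i]).
Variables (domA : X -> Prop) (A : X -> Y) (domB : Y -> Prop) (B : Y -> X).
Variables (L1 : X -> G1) (L2 : X -> G2 -> R[i]) (P1 : Y -> G1 -> R[i]) (P2 : Y -> G2).

Definition domB1 (f : Y * X) : Prop :=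
  (domB f.1 /\ exists x, domA x /\ A x = f.1) /\ domA f.2.
Definition B1 (f : Y * X) : Y * X := (A f.2, B f.1).
Definition Xi0 (f : Y * X) : G1 * G2 := (L1 f.2, P2 f.1).
Definition Xi1 (f : Y * X) : (G1 -> R[i]) * (G2 -> R[i]) :=
  (fun g => - P1 f.1 g, L2 f.2).
Definition Gamma0 (z : X * X) : G1 * G2 := (L1 z.2, P2 (A z.1)).
Definition Gamma1 (z : X * X) : (G1 -> R[i]) * (G2 -> R[i]) :=
  (fun g => - P1 (A z.1) g, L2 z.2).
End Ops.

(* Main.v *)
Require Import Defs.
From HB Require Import structures.
From mathcomp Require Import all_boot all_order all_algebra.
From mathcomp Require Import complex.
From mathcomp Require Import reals.
From mathcomp Require Import ring lra.
From mathcomp Require Import boolp classical_sets.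
Set Implicit Arguments. Unset Strict Implicit. Unset Printing Implicit Defensive.
Import Order.TTheory GRing.Theory Num.Theory.
Local Open Scope complex_scope.
Local Open Scope ring_scope.


Section Cplx.
Variable R : realType.
Implicit Types x y z : R[i].

Lemma ReD x y : complex.Re (x + y) = complex.Re x + complex.Re y.
Proof. by case: x => a b; case: y => c d. Qed.
Lemma ImD x y : complex.Im (x + y) = complex.Im x + complex.Im y.
Proof. by case: x => a b; case: y => c d. Qed.
Lemma ReN x : complex.Re (- x) = - complex.Re x.
Proof. by case: x. Qed.
Lemma ReJ x : complex.Re (x^*) = complex.Re x.
Proof. by case: x. Qed.
Lemma ReRM (t : R) x : complex.Re (t%:C * x) = t * complex.Re x.
Proof. case: x => a b /=. by rewrite !mul0r subr0. Qed.
Lemma ReMJ x : complex.Re (x^* * x) = complex.Re x ^+ 2 + complex.Im x ^+ 2.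
Proof. case: x => a b /=. rewrite !expr2. by rewrite mulNr opprK. Qed.
Lemma conjR (t : R) : (t%:C)^* = t%:C :> R[i].
Proof. exact: conjc_real. Qed.
Lemma mulRC (a b : R) : (a%:C * b%:C : R[i]) = (a * b)%:C.
Proof. by rewrite rmorphM. Qed.
Lemma le_scaled (cr a b : R) : 0 < cr -> 0 <= a -> 0 <= b ->
  cr%:C * (Num.sqrt a)%:C <= (Num.sqrt b)%:C -> cr^+2 * a <= b.
Proof.
move=> hc ha hb. rewrite mulRC lecR.
have := sqr_sqrtr ha. have := sqr_sqrtr hb.
have := sqrtr_ge0 a. have := sqrtr_ge0 b.
move: (Num.sqrt a) (Num.sqrt b) => s1 s2.
move=> h1 h2 <- <- h.
have h3 : 0 <= (s2 - cr * s1) * (s2 + cr * s1).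
  apply: mulr_ge0; first by rewrite subr_ge0.
  apply: addr_ge0 => //; apply: mulr_ge0 => //; exact: ltW.
nra.
Qed.
Lemma ReC (t : R) : complex.Re (t%:C) = t. Proof. by []. Qed.

Lemma cpos x : 0 < x -> exists e : R, 0 < e /\ x = e%:C.
Proof.
case: x => a b; rewrite ltcE /= => /andP[/eqP Hb Ha].
by exists a; split => //; rewrite Hb complexr0.
Qed.

Lemma cnneg x : 0 <= x -> x = (complex.Re x)%:C.
Proof.
case: x => a b; rewrite lecE /= => /andP[/eqP Hb Ha].
by rewrite Hb complexr0.
Qed.

Lemma sqrtC_R (t : R) : 0 <= t -> sqrtC (t%:C) = (Num.sqrt t)%:C.
Proof.
move=> ht. rewrite -[t in t%:C](sqr_sqrtr ht) rmorphXn sqrCK //.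
by rewrite lecR sqrtr_ge0.
Qed.
End Cplx.

Section IP.
Variables (R : realType) (V : lmodType R[i]) (ip : V -> V -> R[i]).
Hypothesis hip : inner_product ip.

Lemma ipJ x y : (ip x y)^* = ip y x.
Proof. by case: hip => _ H _ _; rewrite H conjCK. Qed.

Lemma ip0l z : ip 0 z = 0.
Proof.
case: hip => H _ _ _. have := H (-1) 0 0 z.
by rewrite scaler0 addr0 mulN1r addNr.
Qed.

Lemma ipDl x y z : ip (x + y) z = ip x z + ip y z.
Proof. case: hip => H _ _ _. by rewrite -[x in LHS]scale1r H mul1r. Qed.
Lemma ipZl a x z : ip (a *: x) z = a * ip x z.
Proof. case: hip => H _ _ _. by rewrite -[_ *: _]addr0 H ip0l addr0. Qed.
Lemma ipNl x z : ip (- x) z = - ip x z.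
Proof. by rewrite -scaleN1r ipZl mulN1r. Qed.
Lemma ipDr x y z : ip z (x + y) = ip z x + ip z y.
Proof. by rewrite -ipJ ipDl rmorphD /= !ipJ. Qed.
Lemma ipZr a x z : ip z (a *: x) = a^* * ip z x.
Proof. by rewrite -ipJ ipZl rmorphM /= !ipJ. Qed.
Lemma ipNr x z : ip z (- x) = - ip z x.
Proof. by rewrite -ipJ ipNl rmorphN /= !ipJ. Qed.
Lemma ip0r z : ip z 0 = 0.
Proof. by rewrite -ipJ ip0l rmorph0 /=. Qed.

Definition q (v : V) : R := complex.Re (ip v v).

Lemma ipq v : ip v v = (q v)%:C.
Proof. case: hip => _ _ H _. exact: cnneg. Qed.

Lemma q_ge0 v : 0 <= q v.
Proof. case: hip => _ _ H _. by rewrite -lecR -ipq. Qed.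

Lemma q_eq0 v : q v = 0 -> v = 0.
Proof. case: hip => _ _ _ H. move=> h. apply: H. by rewrite ipq h. Qed.

Lemma qD u v : q (u + v) = q u + q v + 2 * complex.Re (ip u v).
Proof.
rewrite /q ipDl !ipDr !ReD -(ipJ u v) ReJ. lra.
Qed.

Lemma qZ a v : q (a *: v) = (complex.Re a ^+ 2 + complex.Im a ^+ 2) * q v.
Proof.
rewrite /q ipZl ipZr mulrA ipq mulrC ReRM /= mulrC -ReMJ (mulrC a). done.
Qed.

Lemma qN v : q (- v) = q v.
Proof. by rewrite /q ipNl ipNr opprK. Qed.

Lemma qDt u v (t : R) : q (u + t%:C *: v) = q u + t ^+ 2 * q v + 2 * t * complex.Re (ip u v).
Proof.
rewrite qD qZ ipZr conjR ReRM /=. rewrite expr0n /= addr0. lra.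
Qed.

Lemma hnormE v : hnorm ip v = (Num.sqrt (q v))%:C.
Proof. by rewrite /hnorm ipq sqrtC_R // q_ge0. Qed.

Lemma hnorm_lt v (e : R) : 0 < e -> (hnorm ip v < e%:C) = (q v < e ^+ 2).
Proof.
move=> he. rewrite hnormE ltcR -{1}(gtr0_norm he) -sqrtr_sqr ltr_sqrt // exprn_gt0 //.
Qed.

Lemma cs_re u v : complex.Re (ip u v) ^+ 2 <= q u * q v.
Proof.
set r := complex.Re (ip u v).
have H t : 0 <= q u + t ^+ 2 * q v + 2 * t * r by rewrite -qDt q_ge0.
have [hv|hv] := eqVneq (q v) 0.
  have -> : r = 0 by rewrite /r (q_eq0 hv) ip0r.
  rewrite hv expr0n mulr0 /=. done.
have qv0 : 0 < q v by rewrite lt_def hv q_ge0.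
set s := - r / q v.
have hs : r = - s * q v by rewrite /s !mulNr opprK mulfVK.
have := H s. have := q_ge0 u. rewrite hs. nra.
Qed.

Lemma cs_full u v : complex.Re (ip u v) ^+ 2 + complex.Im (ip u v) ^+ 2 <= q u * q v.
Proof.
set w := ip u v.
have := cs_re (w^* *: u) v.
rewrite ipZl qZ ReMJ.
have -> : complex.Re (w^*) ^+ 2 + complex.Im (w^*) ^+ 2 = complex.Re w ^+ 2 + complex.Im w ^+ 2.
  by case: (w) => a b /=; rewrite sqrrN.
move: (complex.Re w ^+ 2 + complex.Im w ^+ 2) (q_ge0 u) (q_ge0 v) => s hu hv.
rewrite expr2 -mulrA. 
have [->|s0] := eqVneq s 0. by rewrite mulr_ge0.
move=> h. nra.
Qed.

Lemma cs_norm u v : `|ip u v| <= hnorm ip u * hnorm ip v.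
Proof.
rewrite !hnormE normc_def -rmorphM lecR -sqrtrM ?q_ge0 // ler_sqrt ?mulr_ge0 ?q_ge0 //.
exact: cs_full.
Qed.

Lemma parallel_le u v : q (u - v) <= 2 * q u + 2 * q v.
Proof.
have := qD u (-v). have := qD u v. rewrite ipNr ReN qN.
have := q_ge0 (u + v). lra.
Qed.

End IP.


Lemma archi_inv (R : realType) (e : R) : 0 < e ->
  exists N : nat, forall n, (N <= n)%N -> (n.+1%:R)^-1 < e.
Proof.
move=> he. exists (Num.trunc (e^-1)) => n hn.
have h1 := truncnS_gt (e^-1).
have h2 : (Num.trunc e^-1).+1%:R <= n.+1%:R :> R by rewrite ler_nat ltnS.
rewrite -(invrK e) ltf_pV2 ?posrE ?invr_gt0 //. 
exact: lt_le_trans h1 h2.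
Qed.

Section Sub.
Variables (R : realType) (V : lmodType R[i]) (M : V -> Prop).
Hypothesis hM : subspace M.
Lemma sub0 : M 0. Proof. by case: hM. Qed.
Lemma subZ a x : M x -> M (a *: x).
Proof. case: hM => h0 H hx. by rewrite -[_ *: _]addr0; apply: H. Qed.
Lemma subD x y : M x -> M y -> M (x + y).
Proof. case: hM => h0 H hx hy. by rewrite -[x]scale1r; apply: H. Qed.
Lemma subN x : M x -> M (- x).
Proof. move=> hx. rewrite -scaleN1r. exact: subZ. Qed.
End Sub.

Section Proj.
Variables (R : realType) (V : lmodType R[i]) (ip : V -> V -> R[i]).
Hypothesis hV : hilbert ip.
Let hip : inner_product ip := hV.1.
Variable M : V -> Prop.
Hypothesis hM : subspace M.
Hypothesis hMc : forall u x, (forall n, M (u n)) -> cvg_seq ip u x -> M x.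

Lemma proj_ex y : exists m, M m /\ forall z, M z -> ip (y - m) z = 0.
Proof.
pose E : set R := fun r => exists m, M m /\ r = q ip (y - m).
pose d := inf E.
have E0 : nonempty E by exists (q ip (y - 0)); exists 0; split => //; exact: sub0.
have El : has_lbound E by exists 0 => r [m [_ ->]]; exact: q_ge0.
have hd m : M m -> d <= q ip (y - m).
  by move=> hm; apply: ge_inf => //; exists m.
have hmin n : exists m, M m /\ q ip (y - m) < d + (n.+1%:R)^-1.
  have : inf E < d + (n.+1%:R)^-1 by rewrite ltrDl invr_gt0 ltr0n.
  by case/(inf_lt E0) => r [m [hm ->]] hr; exists m.
have [ms hms] := choice hmin.
have d0 : 0 <= d by apply: lb_le_inf => // r [m [_ ->]]; exact: q_ge0.
have mid n k : q ip (ms n - ms k) <= 2 * q ip (y - ms n) + 2 * q ip (y - ms k) - 4 * d.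
  set a := y - ms n; set b := y - ms k.
  have Mmid : M ((2^-1 : R)%:C *: (ms n + ms k)).
    by apply: subZ => //; apply: subD => //; [case: (hms n) | case: (hms k)].
  have := hd _ Mmid.
  have eab : a + b = (2 : R)%:C *: (y - (2^-1 : R)%:C *: (ms n + ms k)).
    rewrite scalerBr scalerA -rmorphM mulfV ?pnatr_eq0 // rmorph1 scale1r.
    rewrite /a /b rmorphMn rmorph1 scaler_nat mulr2n. 
    rewrite opprD !addrA. congr (_ + _). rewrite addrAC. done.
  have e2 : q ip (a + b) = 4 * q ip (y - (2^-1 : R)%:C *: (ms n + ms k)).
    by rewrite eab qZ //= expr0n /= addr0; congr (_ * _); lra.
  have ediff : ms n - ms k = - (a - b).
    by rewrite /a /b opprB opprB addrC addrA addrAC [y - ms k - y]addrAC subrr add0r.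
  rewrite ediff qN // .
  have h1 := qD hip a b. have h2 := qD hip a (- b).
  rewrite ipNr // ReN qN // in h2. move=> hh. lra.
have cau : cauchy_seq ip ms.
  move=> eps /cpos [e [he ->]].
  have [N HN] := archi_inv (divr_gt0 (exprn_gt0 2 he) (ltr0n R 4)).
  exists N => n k hn hk. rewrite hnorm_lt //.
  apply: le_lt_trans (mid n k) _.
  have hA : (n.+1%:R^-1 : R) < e^+2 / 4 := HN _ hn.
  have hB : (k.+1%:R^-1 : R) < e^+2 / 4 := HN _ hk.
  have h3 : q ip (y - ms n) < d + (n.+1%:R^-1 : R) := (hms n).2.
  have h4 : q ip (y - ms k) < d + (k.+1%:R^-1 : R) := (hms k).2.
  have hF : e ^+ 2 / 4 * 4 = e ^+ 2 by rewrite mulfVK // pnatr_eq0.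
  move: (e ^+ 2 / 4) hA hB hF => F hA hB hF.
  move: (n.+1%:R^-1 : R) (k.+1%:R^-1 : R) hA hB h3 h4 => A B hA hB h3 h4.
  move: (q ip (y - ms n)) (q ip (y - ms k)) h3 h4 => Q1 Q2 h3 h4.
  lra.
have [m hm] := hV.2 _ cau.
have Mm : M m by apply: (hMc _ hm) => n; case: (hms n).
have claim dl : 0 < dl -> dl <= 1 -> q ip (y - m) <= d + dl * (d + 4).
  move=> hdl hdl1.
  have [N1 HN1] := archi_inv hdl.
  have hdlC : 0 < dl%:C by rewrite ltcR.
  have [N2 HN2] := hm (dl%:C) hdlC.
  pose n := maxn N1 N2.
  have hb : q ip (ms n - m) < dl ^+ 2.
    by rewrite -hnorm_lt //; apply: HN2; rewrite leq_maxr.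
  have hu : q ip (y - ms n) < d + dl.
    have := proj2 (hms n). have := HN1 n (leq_maxl _ _). 
    move: (n.+1%:R^-1 : R) => A. lra.
  have ew : y - m = (y - ms n) + (ms n - m) by rewrite addrA subrK.
  have h1 := qD hip (y - ms n) (ms n - m).
  have h2 := qDt hip (- (ms n - m)) (y - ms n) dl.
  rewrite ipNl // ReN -(ipJ hip) ReJ qN // in h2.
  have h3 := q_ge0 hip (- (ms n - m) + dl%:C *: (y - ms n)).
  rewrite ew.
  move: (q ip (- (ms n - m) + dl%:C *: (y - ms n))) h2 h3 => Q0 h2 h3.
  move: (q ip (y - ms n + (ms n - m))) h1 => Qw h1.
  move: (complex.Re (ip (y - ms n) (ms n - m))) h1 h2 => r h1 h2.
  move: (q ip (y - ms n)) (q ip (ms n - m)) hb hu h1 h2 => Qu Qb hb hu h1 h2.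
  nra.
have hq : q ip (y - m) <= d.
  apply/ler_addgt0Pr => e he.
  pose dl := e / (d + 4 + e).
  have hpos : 0 < d + 4 + e by lra.
  have hdl : dl * (d + 4 + e) = e by rewrite /dl mulfVK // gt_eqF.
  have dl0 : 0 < dl by rewrite /dl divr_gt0.
  have dl1 : dl <= 1.
    rewrite /dl ler_pdivrMr // mul1r. lra.
  have := claim dl dl0 dl1.
  move: (q ip (y - m)) dl dl0 dl1 hdl => Q D h0 h1 h2. nra.
have ore z : M z -> complex.Re (ip (y - m) z) = 0.
  move=> hz.
  have hr t : q ip (y - m) <= q ip (y - m + (- t)%:C *: z).
    apply: le_trans hq _.
    have -> : y - m + (- t)%:C *: z = y - (t%:C *: z + m).
      by rewrite rmorphN scaleNr opprD [RHS]addrA [RHS]addrAC.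
    apply: hd. apply: subD => //. exact: subZ.
  pose s := q ip z + 1.
  have hs : 0 < s by rewrite /s; have := q_ge0 hip z; lra.
  pose r := complex.Re (ip (y - m) z).
  have := hr (r / s). rewrite qDt //.
  have hrt : r = r / s * s by rewrite mulfVK // gt_eqF.
  move: (r / s) hrt => t hrt. rewrite -/r. 
  have := q_ge0 hip z. rewrite /s in hs hrt *. 
  move: (q ip z) (q ip (y - m)) hs hrt => Qz Qw hs hrt. nra.
exists m; split => // z hz.
have h1 := ore z hz.
have h2 := ore _ (subZ hM (Complex 0 1) hz).
rewrite ipZr // in h2.
move: h1 h2. case: (ip (y - m) z) => a b /= -> h2.
have -> : b = 0 by move: h2; rewrite /=; lra.
done.
Qed.
End Proj.


Lemma ran_closed (R : realType) (X Y : lmodType R[i])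
  (ipX : X -> X -> R[i]) (ipY : Y -> Y -> R[i])
  (hX : hilbert ipX) (hY : hilbert ipY)
  (domA : X -> Prop) (A : X -> Y)
  (hA_lin : linear_on domA A) (hA_closed : closed_op ipX ipY domA A)
  (c : R[i]) (hc : 0 < c)
  (hA_below : forall x, domA x -> c * hnorm ipX x <= hnorm ipY (A x)) :
  forall u v, (forall n, exists x, domA x /\ A x = u n) -> cvg_seq ipY u v ->
    exists x, domA x /\ A x = v.
Proof.
move=> u v hu hv. have hXi := hX.1. have hYi := hY.1.
have [xs hxs] := choice hu.
have [cr [hcr ec]] := cpos hc.
have below x : domA x -> cr ^+ 2 * q ipX x <= q ipY (A x).
  move=> hx; have := hA_below x hx. rewrite ec !hnormE //.
  move=> h; exact: (le_scaled hcr (q_ge0 hX.1 x) (q_ge0 hY.1 (A x)) h).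
have Adiff n k : A (xs n - xs k) = u n - u k /\ domA (xs n - xs k).
  have -> : xs n - xs k = (-1) *: xs k + xs n by rewrite scaleN1r addrC.
  case: hA_lin => hs hl. split.
    rewrite hl; [|exact: (proj1 (hxs k))|exact: (proj1 (hxs n))].
    by rewrite scaleN1r addrC (proj2 (hxs n)) (proj2 (hxs k)).
  by case: hs => _ H; apply: H; [exact: (proj1 (hxs k)) | exact: (proj1 (hxs n))].
have cau : cauchy_seq ipX xs.
  move=> eps /cpos [e [he ->]].
  have hdl : 0 < (cr * e / 2)%:C by rewrite ltcR !divr_gt0 ?mulr_gt0.
  have [N HN] := hv _ hdl.
  exists N => n k hn hk. rewrite hnorm_lt //.
  have h1 := HN _ hn. have h2 := HN _ hk.
  rewrite !hnorm_lt ?divr_gt0 ?mulr_gt0 // in h1 h2.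
  have hp := parallel_le hY.1 (u n - v) (u k - v).
  have eq : u n - v - (u k - v) = u n - u k.
    by rewrite opprB addrA subrK.
  rewrite eq in hp.
  case: (Adiff n k) => hA hd. have := below _ hd. rewrite hA.
  have e2 : (cr * e / 2) ^+ 2 * 4 = cr ^+ 2 * e ^+ 2.
    by field.
  move: (q ipX (xs n - xs k)) (q ipY (u n - u k)) hp => Q1 Q2 hp h.
  move: (q ipY (u n - v)) (q ipY (u k - v)) h1 h2 hp => Q3 Q4 h1 h2 hp.
  have hcr2 : 0 < cr ^+ 2 by rewrite exprn_gt0.
  move: (cr * e / 2) e2 h1 h2 => D e2 h1 h2.
  have : cr ^+ 2 * Q1 < cr ^+ 2 * e ^+ 2 by lra.
  by rewrite ltr_pM2l.
have [x hx] := hX.2 _ cau.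
have hAx : cvg_seq ipY (fun n => A (xs n)) v.
  move=> eps he; have [N HN] := hv eps he; exists N => n hn.
  by rewrite (proj2 (hxs n)); exact: HN.
have [hd hAv] := @hA_closed xs x v (fun n => proj1 (hxs n)) hx hAx.
by exists x.
Qed.

Lemma aux0 (R : realType) (a b : R[i]) : -0 - 0 = a - b^* -> b = 0 -> a = 0.
Proof. move=> h hb; move: h; rewrite hb conjC0 !oppr0 !addr0. by move<-. Qed.
Lemma aux1 (R : realType) (a b : R[i]) : -0 - 0 = a - b^* -> a = 0 -> b = 0.
Proof.
move=> h ha; move: h; rewrite ha !oppr0 !add0r.
by move/eqP; rewrite eq_sym oppr_eq0 conjC_eq0 => /eqP.
Qed.

Lemma lin0 (R : realType) (V W : lmodType R[i]) (D : V -> Prop) (T : V -> W) :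
  linear_on D T -> T 0 = 0.
Proof.
case=> [[h0 _] hl]. have := hl (-1) 0 0 h0 h0.
by rewrite scaler0 addr0 scaleN1r addNr.
Qed.

Unset Implicit Arguments.
Theorem lemma3p4 (R : realType) (X Y G1 G2 : lmodType R[i])
  (ipX : X -> X -> R[i]) (ipY : Y -> Y -> R[i])
  (ipG1 : G1 -> G1 -> R[i]) (ipG2 : G2 -> G2 -> R[i])
  (hX : hilbert ipX) (hY : hilbert ipY) (hG1 : hilbert ipG1) (hG2 : hilbert ipG2)
  (domA : X -> Prop) (A : X -> Y)
  (hA_lin : linear_on domA A) (hA_closed : closed_op ipX ipY domA A)
  (hA_dense : dense_in ipX domA)
  (c : R[i]) (hc : 0 < c)
  (hA_below : forall x, domA x -> c * hnorm ipX x <= hnorm ipY (A x))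
  (domB : Y -> Prop) (B : Y -> X)
  (hB_lin : linear_on domB B) (hB_closed : closed_op ipY ipX domB B)
  (hB_dense : dense_in ipY domB)
  (hAB : adjoint_sub_neg ipX ipY domA A domB B)
  (L1 : X -> G1) (L2 : X -> G2 -> R[i]) (P1 : Y -> G1 -> R[i]) (P2 : Y -> G2)
  (hL1 : linear_on domA L1) (hL2 : linear_on_fun domA L2)
  (hL2d : forall x, domA x -> antidual ipG2 (L2 x))
  (hL_surj : forall (g1 : G1) (phi2 : G2 -> R[i]), antidual ipG2 phi2 ->
     exists x, domA x /\ L1 x = g1 /\ L2 x = phi2)
  (hP1 : linear_on_fun domB P1) (hP2 : linear_on domB P2)
  (hP1d : forall y, domB y -> antidual ipG1 (P1 y))
  (hP_surj : forall (phi1 : G1 -> R[i]) (g2 : G2), antidual ipG1 phi1 ->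
     exists y, domB y /\ P1 y = phi1 /\ P2 y = g2)
  (hGreen : forall y x, domB y -> domA x ->
     - ipX (B y) x - ipY y (A x) = P1 y (L1 x) - (L2 x (P2 y))^*) :
  (* (Xi0, Xi1) : dom B1 -> G x G^* is surjective *)
  (forall (g1 : G1) (g2 : G2) (phi1 : G1 -> R[i]) (phi2 : G2 -> R[i]),
     antidual ipG1 phi1 -> antidual ipG2 phi2 ->
     exists f, domB1 domA A domB f /\ Xi0 L1 P2 f = (g1, g2)
                                 /\ Xi1 L2 P1 f = (phi1, phi2))
  /\
  (* abstract Green identity on Y_1 x X with the product inner product *)
  (forall f g, domB1 domA A domB f -> domB1 domA A domB g ->
     (ipY (B1 A B f).1 g.1 + ipX (B1 A B f).2 g.2)
     + (ipY f.1 (B1 A B g).1 + ipX f.2 (B1 A B g).2)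
     = ((Xi1 L2 P1 f).1 (Xi0 L1 P2 g).1 + (Xi1 L2 P1 f).2 (Xi0 L1 P2 g).2)
       + ((Xi1 L2 P1 g).1 (Xi0 L1 P2 f).1 + (Xi1 L2 P1 g).2 (Xi0 L1 P2 f).2)^*)
  /\
  (* Xi_i = Gamma_i diag(A^{-1}, I) *)
  (forall v w z1, domB1 domA A domB (v, w) -> domA z1 -> A z1 = v ->
     Xi0 L1 P2 (v, w) = Gamma0 A L1 P2 (z1, w) /\
     Xi1 L2 P1 (v, w) = Gamma1 A L2 P1 (z1, w)).
Proof.
have hXi := hX.1. have hYi := hY.1. have hG2i := hG2.1.
split; [|split].
- move=> g1 g2 phi1 phi2 hphi1 hphi2.
  have hnphi1 : antidual ipG1 (fun g => - phi1 g).
    case: hphi1 => hl [M0 hM0]; split.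
      by move=> a x y; rewrite hl opprD mulrN.
    by exists M0 => x; rewrite normrN; exact: hM0.
  have [y [hy [hPy1 hPy2]]] := hP_surj _ g2 hnphi1.
  pose Mr := fun v => exists x, domA x /\ A x = v.
  have hMr : subspace Mr.
    case: (hA_lin) => [[h0 hs] hl]. split.
      by exists 0; split => //; exact: lin0 hA_lin.
    move=> a _ _ [x1 [hx1 <-]] [x2 [hx2 <-]].
    by exists (a *: x1 + x2); split; [exact: hs | exact: hl].
  have hMc : forall u x, (forall n, Mr (u n)) -> cvg_seq ipY u x -> Mr x.
    move=> u x hu hux. exact: (ran_closed hX hY hA_lin hA_closed hc hA_below hu hux).
  have [m [Mm horth]] := proj_ex hY hMr hMc y.
  pose y0 := y - m.
  have hadj : adjoint_graph ipX ipY domA A y0 0.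
    move=> x hx. rewrite (ip0r hXi) -(ipJ hYi) horth; last by exists x.
    exact: conjC0.
  have [hy0 hBy0] := hAB y0 0 hadj.
  rewrite oppr0 in hBy0.
  have hP1y0 g : P1 y0 g = 0.
    have z0 : antidual ipG2 (fun _ => 0).
      split; first by move=> a x y'; rewrite mulr0 addr0.
      by exists 0 => x; rewrite normr0 mul0r.
    have [x [hx [eL1 eL2]]] := hL_surj g _ z0.
    have := hGreen y0 x hy0 hx. rewrite hBy0 (ip0l hXi) horth; last by exists x.
    rewrite eL1 eL2 => h. exact: (aux0 h).
  have hP2y0 : P2 y0 = 0.
    pose phi := fun g => ipG2 (P2 y0) g.
    have hphi : antidual ipG2 phi.
      split; first by move=> a x y'; rewrite /phi (ipDr hG2i) (ipZr hG2i).
      by exists (hnorm ipG2 (P2 y0)) => x; exact: cs_norm.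
    have [x [hx [eL1 eL2]]] := hL_surj 0 _ hphi.
    have := hGreen y0 x hy0 hx. rewrite hBy0 (ip0l hXi) horth; last by exists x.
    rewrite eL1 eL2 /phi => h. have := aux1 h (hP1y0 0).
    by case: hG2i => _ _ _ H; apply: H.
  have em : m = (-1) *: y0 + y by rewrite scaleN1r /y0 opprB subrK.
  have hm : domB m.
    rewrite em. case: hB_lin => [[_ hs] _]. exact: hs.
  have hP1m : P1 m = P1 y.
    rewrite em. case: hP1 => _ hl. rewrite hl //.
    by apply: funext => g; rewrite hP1y0 mulr0 add0r.
  have hP2m : P2 m = P2 y.
    rewrite em. case: hP2 => _ hl. by rewrite hl // hP2y0 scaler0 add0r.
  have [x [hx [hLx1 hLx2]]] := hL_surj g1 phi2 hphi2.
  exists (m, x). split; first by split.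
  rewrite /Xi0 /Xi1 /= hLx1 hLx2 hP2m hPy2 hP1m hPy1. split => //.
  congr (_, _). by apply: funext => g; rewrite opprK.
- move=> [v1 w1] [v2 w2] [[hv1 _] hw1] [[hv2 _] hw2] /=.
  have Gr1 := hGreen v1 w2 hv1 hw2.
  have Gr2 := hGreen v2 w1 hv2 hw1.
  have Gr2' := congr1 Num.conj Gr2.
  rewrite rmorphB /= rmorphN /= rmorphB /= conjCK !(ipJ hXi) !(ipJ hYi) in Gr2'.
  rewrite rmorphD /= rmorphN /=.
  move: Gr1 Gr2'.
  move: (ipX (B v1) w2) (ipY v1 (A w2)) (ipX w1 (B v2)) (ipY (A w1) v2) => a1 b1 c1 d1.
  move: (P1 v1 (L1 w2)) (L2 w2 (P2 v1)) (P1 v2 (L1 w1)) (L2 w1 (P2 v2)) => e1 f1 g1 h1.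
  move: (f1^*) (g1^*) => f' g' H1 H2.
  have -> : d1 + a1 + (b1 + c1) = - (- a1 - b1) - (- c1 - d1) by ring.
  rewrite H1 H2. ring.
- move=> v w z1 _ _ <-. by split.
Qed.
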